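(* Consider $\min_u F(u)+G(u)$ under the assumptions below, with $G$ convex and $F+G$ strongly convex. Let $\{(y^t,z^t,x^t)\}$ be generated by the modified PR iteration with $\gamma\in(0,\frac1{12L_F})$. Then $(y^t,z^t,x^t)$ converges to some $(\bar y,\bar z,\bar x)$ with $\bar y=\bar z$ and $\bar z$ the unique minimizer of $F+G$, and the convergence is linear: there exist $M>0$ and $r\in(0,1)$ such that for all $t\ge1$, \[ \max\{\|y^t-\bar y\|^2,\|z^t-\bar z\|^2,\|x^t-\bar x\|^2\}\le M r^t . \]
   Context: Assumptions: $F:\mathbb{R}^n\to\mathbb{R}$ is convex and differentiable with $\nabla F$ Lipschitz continuous with modulus at most $L_F>0$; $G:\mathbb{R}^n\to(-\infty,\infty]$ is proper, lower semicontinuous, and $\operatorname{Argmin}_u\{\tau G(u)+\frac12\|u-w\|^2\}$ is nonempty for every $w$ and every $\tau>0$; $F+G$ is coercive. Modified PR iteration: given $x^0$ and $\gamma\in(0,\frac1{12L_F})$, for $t=0,1,\dots$: $y^{t+1}=\operatorname{argmin}_y\{F(y)+\frac{5L_F}{2}\|y\|^2+\frac1{2\gamma}\|y-x^t\|^2\}$; $z^{t+1}\in\operatorname{Argmin}_z\{G(z)-\frac{5L_F}{2}\|z\|^2+\frac1{2\gamma}\|2y^{t+1}-x^t-z\|^2\}$; $x^{t+1}=x^t+2(z^{t+1}-y^{t+1})$. *)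

(* Defs.v *)
From Stdlib Require Import Reals Lra.
From Stdlib Require Fin.
Open Scope R_scope.

Definition vec (n : nat) := Fin.t n -> R.

Fixpoint vsum (n : nat) : (Fin.t n -> R) -> R :=
  match n return (Fin.t n -> R) -> R with
  | O => fun _ => 0
  | S m => fun f => f Fin.F1 + vsum m (fun i => f (Fin.FS i))
  end.

Definition vadd {n} (u v : vec n) : vec n := fun i => u i + v i.
Definition vsub {n} (u v : vec n) : vec n := fun i => u i - v i.
Definition vscal {n} (a : R) (u : vec n) : vec n := fun i => a * u i.
Definition inner {n} (u v : vec n) : R := vsum n (fun i => u i * v i).
Definition nsq {n} (u : vec n) : R := inner u u.
Definition norm {n} (u : vec n) : R := sqrt (nsq u).

Definition convex {n} (F : vec n -> R) : Prop :=
  forall x y l, 0 <= l <= 1 ->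
    F (vadd (vscal l x) (vscal (1 - l) y)) <= l * F x + (1 - l) * F y.

Definition is_gradient {n} (F : vec n -> R) (gradF : vec n -> vec n) : Prop :=
  forall x eps, 0 < eps -> exists delta, 0 < delta /\
    forall h, norm h < delta ->
      Rabs (F (vadd x h) - F x - inner (gradF x) h) <= eps * norm h.

Definition lipschitz {n} (g : vec n -> vec n) (L : R) : Prop :=
  forall x y, norm (vsub (g x) (g y)) <= L * norm (vsub x y).

(** Extended-real valued functions with values in (-oo, +oo]:
    [None] stands for +oo, [Some a] for the real a. *)
Definition ext := option R.

Definition lt_ext (r : R) (e : ext) : Prop :=
  match e with None => True | Some a => r < a end.

Definition ext_add (e1 e2 : ext) : ext :=
  match e1, e2 with Some a, Some b => Some (a + b) | _, _ => None end.

Definition proper {n} (G : vec n -> ext) : Prop := exists x a, G x = Some a.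

Definition lsc {n} (G : vec n -> ext) : Prop :=
  forall x m, lt_ext m (G x) -> exists delta, 0 < delta /\
    forall y, norm (vsub y x) < delta -> lt_ext m (G y).

Definition convex_ext {n} (G : vec n -> ext) : Prop :=
  forall x y a b l, G x = Some a -> G y = Some b -> 0 <= l <= 1 ->
    exists c, G (vadd (vscal l x) (vscal (1 - l) y)) = Some c /\
      c <= l * a + (1 - l) * b.

Definition strongly_convex_ext {n} (H : vec n -> ext) : Prop :=
  exists mu, 0 < mu /\
  forall x y a b l, H x = Some a -> H y = Some b -> 0 <= l <= 1 ->
    exists c, H (vadd (vscal l x) (vscal (1 - l) y)) = Some c /\
      c <= l * a + (1 - l) * b - mu / 2 * l * (1 - l) * nsq (vsub x y).

Definition coercive_ext {n} (H : vec n -> ext) : Prop :=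
  forall M, exists R0, forall x, R0 < norm x -> lt_ext M (H x).

Definition is_minimizer_ext {n} (H : vec n -> ext) (u : vec n) : Prop :=
  exists a, H u = Some a /\ forall v b, H v = Some b -> a <= b.

Definition sumFG {n} (F : vec n -> R) (G : vec n -> ext) : vec n -> ext :=
  fun u => ext_add (Some (F u)) (G u).

Definition prox_nonempty {n} (G : vec n -> ext) : Prop :=
  forall (w : vec n) tau, 0 < tau ->
    exists u, is_minimizer_ext
      (fun v => match G v with
                | Some b => Some (tau * b + / 2 * nsq (vsub v w))
                | None => None end) u.

(** The modified Peaceman-Rachford iteration (for t = 0,1,...):
    y^{t+1} = argmin_y F(y) + 5L/2 ||y||^2 + 1/(2 gamma) ||y - x^t||^2
    z^{t+1} in Argmin_z G(z) - 5L/2 ||z||^2 + 1/(2 gamma) ||2y^{t+1} - x^t - z||^2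
    x^{t+1} = x^t + 2 (z^{t+1} - y^{t+1}) *)
Definition modified_PR {n} (F : vec n -> R) (G : vec n -> ext) (L gamma : R)
    (y z x : nat -> vec n) : Prop :=
  forall t : nat,
    (forall v,
       F (y (S t)) + 5 * L / 2 * nsq (y (S t))
         + / (2 * gamma) * nsq (vsub (y (S t)) (x t))
       <= F v + 5 * L / 2 * nsq v + / (2 * gamma) * nsq (vsub v (x t))) /\
    is_minimizer_ext
      (fun v => match G v with
                | Some b => Some (b - 5 * L / 2 * nsq v
                         + / (2 * gamma) * nsq (vsub (vsub (vscal 2 (y (S t))) (x t)) v))
                | None => None end) (z (S t)) /\
    x (S t) = vadd (x t) (vscal 2 (vsub (z (S t)) (y (S t)))).

Definition converges_to {n} (s : nat -> vec n) (l : vec n) : Prop :=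
  forall eps, 0 < eps -> exists N, forall t, (N <= t)%nat -> norm (vsub (s t) l) < eps.

(* Main.v *)
Require Import Defs.
From Stdlib Require Import Reals Lra Psatz FunctionalExtensionality ClassicalEpsilon Classical.
Open Scope R_scope.

Section Vec.
Context {n : nat}.

Lemma vsum_ext_gen : forall m (f g : Fin.t m -> R), (forall i, f i = g i) -> vsum m f = vsum m g.
Proof. induction m; intros f g H; simpl; auto. rewrite H. f_equal. apply IHm. intro; apply H. Qed.

Lemma vsum_add_gen : forall m (f g : Fin.t m -> R), vsum m (fun i => f i + g i) = vsum m f + vsum m g.
Proof. induction m; intros f g; simpl. lra. rewrite IHm. lra. Qed.

Lemma vsum_scal_gen : forall m c (f : Fin.t m -> R), vsum m (fun i => c * f i) = c * vsum m f.
Proof. induction m; intros c f; simpl. lra. rewrite IHm. lra. Qed.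

Lemma vsum_le_gen : forall m (f g : Fin.t m -> R), (forall i, f i <= g i) -> vsum m f <= vsum m g.
Proof. induction m; intros f g H; simpl. lra. specialize (IHm (fun i => f (Fin.FS i)) (fun i => g (Fin.FS i))).
  assert (H1 := H Fin.F1). assert (vsum m (fun i => f (Fin.FS i)) <= vsum m (fun i => g (Fin.FS i))) by (apply IHm; auto). lra. Qed.

Lemma vsum_const_gen : forall m c, vsum m (fun _ => c) = INR m * c.
Proof. induction m; intros c; simpl. lra. rewrite IHm. destruct m; simpl; lra. Qed.

Lemma vsum_comp_gen : forall m (f : Fin.t m -> R) i, (forall j, 0 <= f j) -> f i <= vsum m f.
Proof. induction m; intros f i H. inversion i.
  simpl. revert f H. pattern i. apply Fin.caseS'.
  - intros f H. assert (0 <= vsum m (fun i0 => f (Fin.FS i0))).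
    { rewrite <- (Rmult_0_r (INR m)), <- vsum_const_gen. apply vsum_le_gen. intros; apply H. } lra.
  - intros p f H. assert (H1 := H Fin.F1). assert (f (Fin.FS p) <= vsum m (fun i0 => f (Fin.FS i0))).
    { apply (IHm (fun i0 => f (Fin.FS i0))). intros; apply H. } lra. Qed.

Lemma inner_ext (a a' b b' : vec n) : (forall i, a i = a' i) -> (forall i, b i = b' i) -> inner a b = inner a' b'.
Proof. intros H1 H2. unfold inner. apply vsum_ext_gen. intro i. rewrite H1, H2. auto. Qed.

Lemma inner_comm (a b : vec n) : inner a b = inner b a.
Proof. unfold inner. apply vsum_ext_gen. intro; ring. Qed.

Lemma inner_addl (a b c : vec n) : inner (vadd a b) c = inner a c + inner b c.
Proof. unfold inner, vadd. rewrite <- vsum_add_gen. apply vsum_ext_gen. intro; ring. Qed.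
Lemma inner_addr (a b c : vec n) : inner c (vadd a b) = inner c a + inner c b.
Proof. unfold inner, vadd. rewrite <- vsum_add_gen. apply vsum_ext_gen. intro; ring. Qed.
Lemma inner_scall (k : R) (a c : vec n) : inner (vscal k a) c = k * inner a c.
Proof. unfold inner, vscal. rewrite <- vsum_scal_gen. apply vsum_ext_gen. intro; ring. Qed.
Lemma inner_scalr (k : R) (a c : vec n) : inner c (vscal k a) = k * inner c a.
Proof. unfold inner, vscal. rewrite <- vsum_scal_gen. apply vsum_ext_gen. intro; ring. Qed.
Lemma inner_subl (a b c : vec n) : inner (vsub a b) c = inner a c - inner b c.
Proof. unfold inner, vsub. replace (vsum n (fun i => a i * c i) - vsum n (fun i => b i * c i))
  with (vsum n (fun i => a i * c i) + (-1) * vsum n (fun i => b i * c i)) by ring.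
  rewrite <- vsum_scal_gen, <- vsum_add_gen. apply vsum_ext_gen. intro; ring. Qed.
Lemma inner_subr (a b c : vec n) : inner c (vsub a b) = inner c a - inner c b.
Proof. rewrite inner_comm, inner_subl, (inner_comm a), (inner_comm b). auto. Qed.

Lemma nsq_nonneg (a : vec n) : 0 <= nsq a.
Proof. unfold nsq, inner. rewrite <- (Rmult_0_r (INR n)), <- vsum_const_gen. apply vsum_le_gen. intro. nra. Qed.

Lemma nsq_comp (a : vec n) i : (a i)^2 <= nsq a.
Proof. unfold nsq, inner. replace ((a i)^2) with (a i * a i) by ring. apply (vsum_comp_gen n (fun i => a i * a i)). intro; nra. Qed.

Lemma nsq_bound (a : vec n) c : (forall i, (a i)^2 <= c) -> nsq a <= INR n * c.
Proof. intro H. unfold nsq, inner. rewrite <- vsum_const_gen. apply vsum_le_gen. intro i. specialize (H i). nra. Qed.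

Lemma nsq_zero (a : vec n) : nsq a <= 0 -> forall i, a i = 0.
Proof. intros H i. assert (H1 := nsq_comp a i). nra. Qed.

Lemma norm_sq (a : vec n) : norm a * norm a = nsq a.
Proof. unfold norm. apply sqrt_sqrt, nsq_nonneg. Qed.
Lemma norm_nonneg (a : vec n) : 0 <= norm a.
Proof. unfold norm. apply sqrt_pos. Qed.

Lemma norm_lt (a : vec n) d : 0 < d -> nsq a < d * d -> norm a < d.
Proof. intros Hd H. assert (H0 := norm_nonneg a). rewrite <- norm_sq in H. nra. Qed.

Lemma nsq_scal k (a : vec n) : nsq (vscal k a) = k * k * nsq a.
Proof. unfold nsq. rewrite inner_scall, inner_scalr. ring. Qed.

Lemma norm_scal k (a : vec n) : 0 <= k -> norm (vscal k a) = k * norm a.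
Proof. intro Hk. unfold norm. rewrite nsq_scal. rewrite sqrt_mult_alt by nra. rewrite sqrt_square; auto. Qed.

Lemma vec_eq (a b : vec n) : (forall i, a i = b i) -> a = b.
Proof. intro H. apply functional_extensionality. auto. Qed.

End Vec.

Create HintDb vexp.
#[export] Hint Rewrite @inner_addl @inner_addr @inner_scall @inner_scalr @inner_subl @inner_subr : vexp.
Ltac vexpand := unfold nsq in *; autorewrite with vexp in *.
Ltac vexp := unfold nsq; autorewrite with vexp.
Lemma nsq_comp' {n} (a : vec n) i : a i * a i <= nsq a.
Proof. assert (H := nsq_comp a i). simpl in H. lra. Qed.
Lemma nsq_comp_sub {n} (a b : vec n) i : (a i - b i) * (a i - b i) <= nsq (vsub a b).
Proof. apply (nsq_comp' (vsub a b) i). Qed.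
Lemma vsum_sub_gen : forall m (f g : Fin.t m -> R), vsum m (fun i => f i - g i) = vsum m f - vsum m g.
Proof. intros m f g. replace (vsum m f - vsum m g) with (vsum m f + (-1) * vsum m g) by ring.
  rewrite <- vsum_scal_gen, <- vsum_add_gen. apply vsum_ext_gen. intro; ring. Qed.
Ltac to_vsum := unfold nsq, inner;
  repeat (rewrite <- vsum_scal_gen || rewrite <- vsum_add_gen || rewrite <- vsum_sub_gen).
Ltac vpt := to_vsum; apply vsum_ext_gen; intro; unfold vadd, vsub, vscal.
Lemma lim_le (A B C : R) : 0 <= C -> (forall eps, 0 < eps -> B - eps * C <= A) -> B <= A.
Proof. intros HC H. destruct (Rle_lt_dec B A); auto.
  assert (He : 0 < (B - A) / (C + 1)) by (apply Rdiv_lt_0_compat; lra).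
  specialize (H _ He). exfalso.
  assert ((B - A) / (C + 1) * C < B - A).
  { unfold Rdiv. rewrite Rmult_assoc. rewrite <- (Rmult_1_r (B - A)) at 2. apply Rmult_lt_compat_l. lra.
    apply (Rmult_lt_reg_l (C+1)). lra. field_simplify; lra. }
  lra. Qed.

Lemma Rabs_le_between' a b : Rabs a <= b -> - b <= a <= b.
Proof. intro H. split. assert (H1 := Rle_abs (-a)). rewrite Rabs_Ropp in H1. lra. assert (H1 := Rle_abs a). lra. Qed.

Section Smooth.
Context {n : nat} (F : vec n -> R) (g : vec n -> vec n) (L : R).
Hypothesis Fconv : convex F.
Hypothesis Fgrad : is_gradient F g.
Hypothesis Lpos : 0 < L.
Hypothesis Flip : lipschitz g L.

Lemma grad_small x h eps : 0 < eps -> exists l0, 0 < l0 <= 1 /\ forall l, 0 < l <= l0 ->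
  Rabs (F (vadd x (vscal l h)) - F x - l * inner (g x) h) <= eps * l * norm h.
Proof. intro He. destruct (Fgrad x eps He) as [d [Hd Hf]].
  assert (Hn := norm_nonneg h).
  exists (Rmin 1 (d / (norm h + 1))). split.
  { split. apply Rmin_glb_lt. lra. apply Rdiv_lt_0_compat; lra. apply Rmin_l. }
  intros l [Hl1 Hl2]. assert (Hl3 := Rle_trans _ _ _ Hl2 (Rmin_r _ _)).
  assert (norm (vscal l h) < d).
  { rewrite norm_scal by lra. apply Rle_lt_trans with (d / (norm h + 1) * norm h).
    apply Rmult_le_compat_r; lra. unfold Rdiv. rewrite Rmult_assoc.
    rewrite <- (Rmult_1_r d) at 2. apply Rmult_lt_compat_l. lra.
    apply (Rmult_lt_reg_l (norm h + 1)). lra. field_simplify; lra. }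
  specialize (Hf _ H). rewrite inner_scalr, norm_scal in Hf by lra.
  replace (eps * l * norm h) with (eps * (l * norm h)) by ring. auto. Qed.

Lemma conv_comb (x v : vec n) l : vadd (vscal l v) (vscal (1 - l) x) = vadd x (vscal l (vsub v x)).
Proof. apply vec_eq. intro i. unfold vadd, vscal, vsub. ring. Qed.

Lemma grad_ineq x v : F x + inner (g x) (vsub v x) <= F v.
Proof. apply (lim_le _ _ (norm (vsub v x))). apply norm_nonneg. intros eps He.
  destruct (grad_small x (vsub v x) eps He) as [l0 [Hl0 Hs]].
  specialize (Hs l0 (conj (proj1 Hl0) (Rle_refl _))).
  assert (Hc := Fconv v x l0 (conj (Rlt_le _ _ (proj1 Hl0)) (proj2 Hl0))).
  rewrite conv_comb in Hc. apply Rabs_le_between' in Hs.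
  assert (l0 * (F x + inner (g x) (vsub v x) - eps * norm (vsub v x)) <= l0 * F v) by nra.
  apply Rmult_le_reg_l in H; lra. Qed.

Lemma lip_sq x v : nsq (vsub (g x) (g v)) <= L * L * nsq (vsub x v).
Proof. assert (H := Flip x v). rewrite <- !norm_sq.
  assert (H1 := norm_nonneg (vsub (g x) (g v))). assert (H2 := norm_nonneg (vsub x v)). nra. Qed.

Lemma inner_le_lip (A B : vec n) : nsq A <= L * L * nsq B -> inner A B <= L * nsq B.
Proof. intro H. assert (H0 := nsq_nonneg (vsub A (vscal L B))). vexpand.
  rewrite (inner_comm B A) in H0. nra. Qed.

Lemma descent x v : F v <= F x + inner (g x) (vsub v x) + L * nsq (vsub v x).
Proof. assert (H := grad_ineq v x).
  assert (H2 := inner_le_lip (vsub (g v) (g x)) (vsub v x) (lip_sq v x)).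
  assert (E : inner (g v) (vsub x v) = - inner (g x) (vsub v x) - inner (vsub (g v) (g x)) (vsub v x)).
  { vexpand. ring. } lra. Qed.

Lemma baillon x v : F x + inner (g x) (vsub v x) + nsq (vsub (g v) (g x)) / (4 * L) <= F v.
Proof. set (D := vsub (g v) (g x)). remember (/ (2 * L)) as s eqn:Hsd.
  set (w := vsub v (vscal s D)).
  assert (H1 := grad_ineq x w). assert (H2 := descent v w).
  assert (E1 : inner (g x) (vsub w x) = inner (g x) (vsub v x) - s * inner (g x) D).
  { unfold w. vexpand. ring. }
  assert (E2 : inner (g v) (vsub w v) = - s * inner (g v) D).
  { unfold w. vexpand. ring. }
  assert (E3 : nsq (vsub w v) = s * s * nsq D).
  { unfold w. vexpand. ring. }
  assert (E4 : inner (g v) D - inner (g x) D = nsq D).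
  { unfold D. vexpand. rewrite (inner_comm (g x) (g v)). ring. }
  assert (Hs : L * (s * s * nsq D) = s / 2 * nsq D) by (rewrite Hsd; field; apply Rgt_not_eq; lra).
  assert (Hs2 : s / 2 * nsq D = nsq D / (4 * L)) by (rewrite Hsd; field; apply Rgt_not_eq; lra).
  rewrite E3, Hs in H2. rewrite E1 in H1. rewrite E2 in H2. assert (E5 : s * inner (g v) D - s * inner (g x) D = s * nsq D) by (rewrite <- E4; ring). clear Hsd. clearbody D w. lra. Qed.

Lemma cocoercive x v : nsq (vsub (g v) (g x)) / (2 * L) <= inner (vsub (g v) (g x)) (vsub v x).
Proof. assert (H1 := baillon x v). assert (H2 := baillon v x).
  assert (E : nsq (vsub (g x) (g v)) = nsq (vsub (g v) (g x))).
  { vexpand. rewrite (inner_comm (g x) (g v)). ring. }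
  assert (E2 : inner (vsub (g v) (g x)) (vsub v x) = - inner (g x) (vsub v x) - inner (g v) (vsub x v)).
  { vexpand. ring. }
  rewrite E in H2. assert (E3: nsq (vsub (g v) (g x)) / (2 * L) = nsq (vsub (g v) (g x)) / (4 * L) + nsq (vsub (g v) (g x)) / (4 * L)) by (field; lra).
  lra. Qed.

End Smooth.
Lemma lim_le01 (A B C : R) : 0 <= C -> (forall l, 0 < l <= 1 -> B - l * C <= A) -> B <= A.
Proof. intros HC H. apply (lim_le A B C HC). intros eps He.
  assert (H1 := H (Rmin eps 1) (conj (Rmin_glb_lt _ _ _ He Rlt_0_1) (Rmin_r _ _))).
  assert (Rmin eps 1 <= eps) by apply Rmin_l. nra. Qed.

Section Prox.
Context {n : nat}.

Lemma ystep_foc (F : vec n -> R) (g : vec n -> vec n) (al be : R) (x y : vec n) :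
  is_gradient F g -> 0 <= al -> 0 <= be ->
  (forall v, F y + al * nsq y + be * nsq (vsub y x) <= F v + al * nsq v + be * nsq (vsub v x)) ->
  forall i, g y i + 2 * al * y i + 2 * be * (y i - x i) = 0.
Proof. intros Fg Hal Hbe Hmin.
  set (gg := fun i => g y i + 2 * al * y i + 2 * be * (y i - x i)).
  assert (Hpos : forall h, 0 <= inner gg h).
  { intro h. apply (lim_le _ _ (norm h + 1)). assert (H0 := norm_nonneg h). lra.
    intros eps He. destruct (grad_small F g Fg y h eps He) as [l0 [Hl0 Hs]].
    assert (Hq := nsq_nonneg h).
    set (l := Rmin l0 (eps / ((al + be) * nsq h + 1))).
    assert (Hl1 : 0 < l). { apply Rmin_glb_lt. lra. apply Rdiv_lt_0_compat. lra. nra. }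
    assert (Hl2 : l <= l0) by apply Rmin_l.
    assert (Hl3 : l * ((al + be) * nsq h) <= eps).
    { assert (l <= eps / ((al + be) * nsq h + 1)) by apply Rmin_r.
      assert (eps / ((al + be) * nsq h + 1) * ((al + be) * nsq h) <= eps).
      { unfold Rdiv. rewrite Rmult_assoc. rewrite <- (Rmult_1_r eps) at 2. apply Rmult_le_compat_l. lra.
        apply (Rmult_le_reg_l ((al + be) * nsq h + 1)). nra. field_simplify; nra. }
      assert (0 <= (al + be) * nsq h) by nra. nra. }
    specialize (Hs l (conj Hl1 Hl2)). apply Rabs_le_between' in Hs.
    specialize (Hmin (vadd y (vscal l h))).
    assert (E1 : nsq (vadd y (vscal l h)) = nsq y + 2 * l * inner y h + l * l * nsq h).
    { vexpand. rewrite (inner_comm h y). ring. }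
    assert (E2 : nsq (vsub (vadd y (vscal l h)) x) = nsq (vsub y x) + 2 * l * inner (vsub y x) h + l * l * nsq h).
    { vexpand. rewrite (inner_comm h y), (inner_comm h x). ring. }
    assert (E3 : inner gg h = inner (g y) h + 2 * al * inner y h + 2 * be * inner (vsub y x) h).
    { rewrite (inner_ext gg (vadd (g y) (vadd (vscal (2 * al) y) (vscal (2 * be) (vsub y x)))) h h).
      vexpand. ring. intro i; unfold gg, vadd, vscal, vsub; ring. auto. }
    rewrite E1, E2 in Hmin.
    assert (HH : l * (- eps * norm h - l * ((al + be) * nsq h)) <= l * (inner gg h)).
    { rewrite E3. nra. }
    apply Rmult_le_reg_l in HH; [|lra]. lra. }
  specialize (Hpos (vscal (-1) gg)). rewrite inner_scalr in Hpos.
  assert (Hz : nsq gg <= 0) by (unfold nsq; lra).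
  intro i. apply (nsq_zero gg Hz i). Qed.

Lemma zstep_sub (G : vec n -> ext) (al be : R) (W z : vec n) :
  convex_ext G -> 0 <= be - al ->
  is_minimizer_ext (fun v => match G v with
      | Some b => Some (b - al * nsq v + be * nsq (vsub W v)) | None => None end) z ->
  exists bz, G z = Some bz /\ forall u bu, G u = Some bu ->
    bz + 2 * al * inner z (vsub u z) + 2 * be * inner (vsub W z) (vsub u z) <= bu.
Proof. intros Gc Hab [a [Ha Hmin]]. destruct (G z) as [bz|] eqn:Gz; [|discriminate].
  injection Ha as Ha. exists bz. split; auto. intros u bu Gu.
  set (d := vsub u z).
  apply (lim_le01 _ _ ((be - al) * nsq d)). assert (H0 := nsq_nonneg d). nra.
  intros l [Hl1 Hl2]. destruct (Gc u z bu bz l Gu Gz (conj (Rlt_le _ _ Hl1) Hl2)) as [c [Gc1 Gc2]].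
  rewrite conv_comb in Gc1. fold d in Gc1.
  specialize (Hmin (vadd z (vscal l d))). rewrite Gc1 in Hmin.
  specialize (Hmin _ eq_refl).
  assert (E1 : nsq (vadd z (vscal l d)) = nsq z + 2 * l * inner z d + l * l * nsq d).
  { vexpand. rewrite (inner_comm d z). ring. }
  assert (E2 : nsq (vsub W (vadd z (vscal l d))) = nsq (vsub W z) - 2 * l * inner (vsub W z) d + l * l * nsq d).
  { vexpand. rewrite (inner_comm d z), (inner_comm d W). ring. }
  rewrite E1, E2, <- Ha in Hmin.
  assert (HH : l * (bz + 2 * al * inner z d + 2 * be * inner (vsub W z) d - l * ((be - al) * nsq d)) <= l * bu) by nra.
  apply Rmult_le_reg_l in HH; lra. Qed.

Lemma min_sub (F : vec n -> R) (g : vec n -> vec n) (G : vec n -> ext) (us : vec n) :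
  is_gradient F g -> convex_ext G -> is_minimizer_ext (sumFG F G) us ->
  exists bs, G us = Some bs /\ forall u bu, G u = Some bu -> bs - inner (g us) (vsub u us) <= bu.
Proof. intros Fg Gc [a [Ha Hmin]]. unfold sumFG, ext_add in Ha. destruct (G us) as [bs|] eqn:Gs; [|discriminate].
  injection Ha as Ha. exists bs. split; auto. intros u bu Gu. set (h := vsub u us).
  apply (lim_le _ _ (norm h)). apply norm_nonneg. intros eps He.
  destruct (grad_small F g Fg us h eps He) as [l0 [Hl0 Hs]].
  specialize (Hs l0 (conj (proj1 Hl0) (Rle_refl _))). apply Rabs_le_between' in Hs.
  destruct (Gc u us bu bs l0 Gu Gs (conj (Rlt_le _ _ (proj1 Hl0)) (proj2 Hl0))) as [c [Gc1 Gc2]].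
  rewrite conv_comb in Gc1. fold h in Gc1.
  specialize (Hmin (vadd us (vscal l0 h)) (F (vadd us (vscal l0 h)) + c)).
  unfold sumFG, ext_add in Hmin. rewrite Gc1 in Hmin. specialize (Hmin eq_refl).
  assert (HH : l0 * (bs - inner (g us) h - eps * norm h) <= l0 * bu) by nra.
  apply Rmult_le_reg_l in HH; lra. Qed.

End Prox.
Lemma arch_inv eps : 0 < eps -> exists N, forall k, (N <= k)%nat -> / (INR k + 1) < eps.
Proof. intro He. destruct (archimed_cor1 eps He) as [N [HN1 HN2]]. exists N. intros k Hk.
  apply le_INR in Hk. assert (0 < INR N) by (apply lt_0_INR; lia).
  apply Rle_lt_trans with (/ INR N); auto. apply Rinv_le_contravar; lra. Qed.

Lemma sq_lt_abs a e : 0 < e -> a * a < e * e -> Rabs a < e.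
Proof. intros He H. unfold Rabs. destruct (Rcase_abs a); nra. Qed.

Lemma cv_le (u : nat -> R) l k B : Un_cv u l -> (forall j, (k <= j)%nat -> u j <= B) -> l <= B.
Proof. intros Hu Hb. destruct (Rle_lt_dec l B); auto. exfalso.
  destruct (Hu (l - B)) as [N HN]. lra. specialize (HN (max N k) (Nat.le_max_l _ _)).
  specialize (Hb (max N k) (Nat.le_max_r _ _)). unfold Rdist in HN.
  assert (H1 := Rle_abs (u (max N k) - l)). assert (H2 := Rle_abs (-(u (max N k) - l))). rewrite Rabs_Ropp in H2. lra. Qed.

Lemma cv_const c : Un_cv (fun _ => c) c.
Proof. intros eps He. exists O. intros. unfold Rdist. rewrite Rminus_diag, Rabs_R0. lra. Qed.

Section SC.
Context {n : nat} (F : vec n -> R) (g : vec n -> vec n) (G : vec n -> ext) (mu : R).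
Hypothesis Fconv : convex F.
Hypothesis Fgrad : is_gradient F g.
Hypothesis Gconv : convex_ext G.
Hypothesis Glsc : lsc G.
Hypothesis Gprop : proper G.
Hypothesis mupos : 0 < mu.
Hypothesis Hsc : forall x y a b l, sumFG F G x = Some a -> sumFG F G y = Some b -> 0 <= l <= 1 ->
    exists c, sumFG F G (vadd (vscal l x) (vscal (1 - l) y)) = Some c /\
      c <= l * a + (1 - l) * b - mu / 2 * l * (1 - l) * nsq (vsub x y).

Lemma sc_mid u v a b : sumFG F G u = Some a -> sumFG F G v = Some b ->
  exists c, sumFG F G (vadd v (vscal (/2) (vsub u v))) = Some c /\ c <= a / 2 + b / 2 - mu / 8 * nsq (vsub u v).
Proof. intros Hu Hv. destruct (Hsc u v a b (/2) Hu Hv) as [c [H1 H2]]. lra.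
  rewrite conv_comb in H1. exists c. split; auto. lra. Qed.

Lemma min_unique u1 u2 : is_minimizer_ext (sumFG F G) u1 -> is_minimizer_ext (sumFG F G) u2 -> u1 = u2.
Proof. intros [a1 [H1 M1]] [a2 [H2 M2]]. destruct (sc_mid u1 u2 a1 a2 H1 H2) as [c [Hc1 Hc2]].
  assert (M1' := M1 _ _ Hc1). assert (a1 <= a2) by (apply (M1 _ _ H2)). assert (a2 <= a1) by (apply (M2 _ _ H1)).
  assert (Hn := nsq_nonneg (vsub u1 u2)). assert (Hz : nsq (vsub u1 u2) <= 0) by nra.
  apply vec_eq. intro i. assert (E := nsq_zero _ Hz i). unfold vsub in E. lra. Qed.

Lemma min_growth us a z hz : sumFG F G us = Some a -> (forall v b, sumFG F G v = Some b -> a <= b) ->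
  sumFG F G z = Some hz -> a + mu / 4 * nsq (vsub z us) <= hz.
Proof. intros Ha M Hz. destruct (sc_mid z us hz a Hz Ha) as [c [Hc1 Hc2]]. assert (M' := M _ _ Hc1). lra. Qed.

Lemma sumFG_some u a : sumFG F G u = Some a -> exists b, G u = Some b /\ a = F u + b.
Proof. unfold sumFG, ext_add. destruct (G u); intro H; [|discriminate]. injection H as H. eauto. Qed.

Lemma exists_min (z1 s1 : vec n) (bz1 : R) : G z1 = Some bz1 ->
  (forall u bu, G u = Some bu -> bz1 + inner s1 (vsub u z1) <= bu) ->
  exists us, is_minimizer_ext (sumFG F G) us.
Proof. intros Gz1 Hs1.
  set (H := sumFG F G).
  set (g1 := vadd (g z1) s1).
  set (Lb := F z1 + bz1 - nsq g1 / mu).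
  assert (Hlb : forall v b, H v = Some b -> Lb <= b).
  { intros v b Hv. assert (Hz1 : H z1 = Some (F z1 + bz1)) by (unfold H, sumFG; rewrite Gz1; auto).
    destruct (sc_mid v z1 b _ Hv Hz1) as [c [Hc1 Hc2]].
    set (d := vsub v z1) in *. set (mid := vadd z1 (vscal (/2) d)) in *.
    destruct (sumFG_some _ _ Hc1) as [cg [Gm Ec]].
    assert (A1 := grad_ineq F g Fconv Fgrad z1 mid). assert (A2 := Hs1 _ _ Gm).
    assert (E1 : vsub mid z1 = vscal (/2) d). { apply vec_eq; intro i; unfold mid, vsub, vadd, vscal; ring. }
    rewrite E1, inner_scalr in A1, A2.
    assert (E2 : inner g1 d = inner (g z1) d + inner s1 d) by (unfold g1; vexpand; ring).
    assert (P := nsq_nonneg (vadd g1 (vscal (mu / 2) d))).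
    assert (E3 : nsq (vadd g1 (vscal (mu / 2) d)) = nsq g1 + mu * inner g1 d + mu / 2 * (mu / 2) * nsq d).
    { vexp. rewrite (inner_comm d g1). field. }
    assert (HH : mu * (nsq g1 / mu) = nsq g1). { field. lra. }
    unfold Lb. nra. }
  set (S := fun r => exists v, H v = Some (- r)).
  assert (Sb : bound S). { exists (- Lb). intros r [v Hv]. specialize (Hlb _ _ Hv). lra. }
  destruct Gprop as [x0 [a0 Ga0]].
  assert (Sne : exists r, S r). { exists (- (F x0 + a0)). exists x0. unfold H, sumFG. rewrite Ga0. simpl. f_equal. ring. }
  destruct (completeness S Sb Sne) as [m [Hm1 Hm2]].
  set (I := - m).
  assert (HI1 : forall v a, H v = Some a -> I <= a).
  { intros v a Hv. assert (S (- a)) by (exists v; rewrite Ropp_involutive; auto). specialize (Hm1 _ H0). unfold I. lra. }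
  assert (HI2 : forall eps, 0 < eps -> exists p : vec n * R, H (fst p) = Some (snd p) /\ snd p < I + eps).
  { intros eps He. apply NNPP. intro Hn.
    assert (Hub : is_upper_bound S (m - eps)).
    { intros r [v Hv]. destruct (Rle_lt_dec r (m - eps)); auto. exfalso. apply Hn. exists (v, - r).
      simpl. split; auto. unfold I. lra. }
    specialize (Hm2 _ Hub). lra. }
  set (seqp := fun k : nat => proj1_sig (constructive_indefinite_description _
                 (HI2 (/ (INR k + 1)) (Rinv_0_lt_compat _ (Rle_lt_0_plus_1 _ (pos_INR k)))))).
  assert (Hseq : forall k, H (fst (seqp k)) = Some (snd (seqp k)) /\ snd (seqp k) < I + / (INR k + 1)).
  { intro k. unfold seqp. destruct (constructive_indefinite_description _ _) as [p Hp]. simpl. auto. }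
  set (w := fun k => fst (seqp k)).
  set (beta := fun k : nat => 8 / mu * / (INR k + 1)).
  assert (Hcauchy : forall j k, (k <= j)%nat -> nsq (vsub (w j) (w k)) <= beta k).
  { intros j k Hjk. destruct (Hseq j) as [Hj1 Hj2]. destruct (Hseq k) as [Hk1 Hk2].
    destruct (sc_mid _ _ _ _ Hj1 Hk1) as [c [Hc1 Hc2]]. specialize (HI1 _ _ Hc1).
    apply le_INR in Hjk. assert (/ (INR j + 1) <= / (INR k + 1)).
    { apply Rinv_le_contravar. assert (H0 := pos_INR k). lra. lra. }
    assert (P1 : mu / 8 * nsq (vsub (w j) (w k)) <= / (INR k + 1)). { unfold w. lra. }
    unfold beta. apply (Rmult_le_reg_l (mu / 8)). lra.
    replace (mu / 8 * (8 / mu * / (INR k + 1))) with (/ (INR k + 1)) by (field; split; [assert (Hp0 := pos_INR k); lra | lra]). auto. }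
  assert (Hbeta : forall eps, 0 < eps -> exists N, forall k, (N <= k)%nat -> beta k < eps).
  { intros eps He. destruct (arch_inv (eps * mu / 8)) as [N HN]. apply Rdiv_lt_0_compat; nra.
    exists N. intros k Hk. specialize (HN k Hk). unfold beta.
    apply Rlt_le_trans with (8 / mu * (eps * mu / 8)). apply Rmult_lt_compat_l. apply Rdiv_lt_0_compat; lra. auto.
    right. field. lra. }
  assert (Hbeta0 : forall k, 0 <= beta k).
  { intro k. unfold beta. assert (Hp0 := pos_INR k). apply Rmult_le_pos. apply Rlt_le, Rdiv_lt_0_compat; lra.
    apply Rlt_le, Rinv_0_lt_compat; lra. }
  assert (Hcc : forall i, Cauchy_crit (fun k => w k i)).
  { intros i eps He. destruct (Hbeta (eps * eps)) as [N HN]. nra. exists N. intros p q Hp Hq. unfold Rdist.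
    cbv beta. apply sq_lt_abs; auto. destruct (Nat.le_ge_cases q p) as [Hqp | Hqp].
    - assert (A := nsq_comp_sub (w p) (w q) i). specialize (Hcauchy p q Hqp). specialize (HN q Hq). nra.
    - assert (A := nsq_comp_sub (w q) (w p) i). specialize (Hcauchy q p Hqp). specialize (HN p Hp). nra. }
  set (wbar := fun i => proj1_sig (R_complete _ (Hcc i))).
  assert (Hwb : forall k, nsq (vsub (w k) wbar) <= INR n * beta k).
  { intro k. apply nsq_bound. intro i. unfold vsub.
    assert (cv : Un_cv (fun j => (w j i - w k i) * (w j i - w k i)) ((wbar i - w k i) * (wbar i - w k i))).
    { assert (c1 : Un_cv (fun j => w j i) (wbar i)) by (unfold wbar; destruct (R_complete _ (Hcc i)); auto).
      assert (c2 := CV_minus _ _ _ _ c1 (cv_const (w k i))). apply (CV_mult _ _ _ _ c2 c2). }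
    assert (Hl := cv_le _ _ k (beta k) cv). 
    assert ((wbar i - w k i) * (wbar i - w k i) <= beta k).
    { apply Hl. intros j Hj. assert (A := nsq_comp_sub (w j) (w k) i). specialize (Hcauchy j k Hj). nra. }
    nra. }
  assert (Hno : forall dl, 0 < dl -> ~ lt_ext (I - F wbar + 2 * dl) (G wbar)).
  { intros dl Hdl Hlt. destruct (Glsc wbar _ Hlt) as [rho [Hrho Hl]].
    set (gw := g wbar). assert (Hgw := nsq_nonneg gw).
    set (eta := dl / (nsq gw + 1)).
    assert (Heta : 0 < eta) by (apply Rdiv_lt_0_compat; lra).
    assert (Heta2 : eta * nsq gw <= dl).
    { assert (eta * (nsq gw + 1) = dl) by (unfold eta; field; lra). nra. }
    assert (Hn0 := pos_INR n).
    set (target := Rmin (rho * rho / (INR n + 1)) (dl * eta / (INR n + 1))).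
    assert (Ht : 0 < target). { apply Rmin_glb_lt; apply Rdiv_lt_0_compat; nra. }
    destruct (Hbeta target Ht) as [N1 HN1]. destruct (arch_inv dl Hdl) as [N2 HN2].
    set (k := max N1 N2). specialize (HN1 k (Nat.le_max_l _ _)). specialize (HN2 k (Nat.le_max_r _ _)).
    specialize (Hwb k). specialize (Hbeta0 k).
    assert (Hlt1 : INR n * beta k < (INR n + 1) * target) by nra.
    assert (Ht1 : (INR n + 1) * target <= rho * rho).
    { assert (target <= rho * rho / (INR n + 1)) by apply Rmin_l.
      apply Rle_trans with ((INR n + 1) * (rho * rho / (INR n + 1))). apply Rmult_le_compat_l; lra. right; field; lra. }
    assert (Ht2 : (INR n + 1) * target <= dl * eta).
    { assert (target <= dl * eta / (INR n + 1)) by apply Rmin_r.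
      apply Rle_trans with ((INR n + 1) * (dl * eta / (INR n + 1))). apply Rmult_le_compat_l; lra. right; field; lra. }
    assert (Hnr : norm (vsub (w k) wbar) < rho) by (apply norm_lt; lra).
    specialize (Hl _ Hnr).
    destruct (Hseq k) as [Hk1 Hk2]. fold (w k) in Hk1.
    destruct (sumFG_some _ _ Hk1) as [bk [Gk Ek]]. rewrite Gk in Hl. simpl in Hl.
    assert (A1 := grad_ineq F g Fconv Fgrad wbar (w k)). fold gw in A1.
    set (dd := vsub (w k) wbar) in *.
    assert (P := nsq_nonneg (vadd (vscal eta gw) dd)).
    assert (E3 : nsq (vadd (vscal eta gw) dd) = eta * eta * nsq gw + 2 * eta * inner gw dd + nsq dd).
    { vexp. rewrite (inner_comm dd gw). ring. }
    assert (A2 : - dl < inner gw dd).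
    { assert (2 * eta * inner gw dd > - (2 * eta * dl)) by nra.
      apply (Rmult_lt_reg_l (2 * eta)). lra. lra. }
    lra. }
  case_eq (G wbar); [intros bw Gw | intros Gw]; rewrite Gw in Hno.
  2: { exfalso. apply (Hno 1 Rlt_0_1). simpl. auto. }
  assert (Hbw : F wbar + bw <= I).
  { destruct (Rle_lt_dec (F wbar + bw) I) as [Hle|Hlt]; auto. exfalso.
    apply (Hno ((F wbar + bw - I) / 4)). lra. simpl. lra. }
  exists wbar. exists (F wbar + bw). split. unfold H, sumFG. rewrite Gw. auto.
  intros v b Hv. specialize (HI1 v b Hv). lra.
Qed.

End SC.
Lemma core (l m yy zz uu qq yz yu zu qz XX XP : R) :
  0 < l -> l < / 12 -> 0 < m ->
  0 <= yy -> 0 <= zz -> 0 <= uu -> 0 <= qq -> 0 <= yy - 2 * yz + zz ->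
  XX = (1 + 5 * l) ^ 2 * yy + 2 * (1 + 5 * l) * yu + uu ->
  XP = (1 - 5 * l) ^ 2 * yy + 4 * zz + uu - 4 * (1 - 5 * l) * yz - 2 * (1 - 5 * l) * yu + 4 * zu ->
  0 <= XP ->
  uu <= 2 * l * yu ->
  0 <= (1 - 5 * l) * yz - (1 - 5 * l) * zz - zu ->
  m * zz <= (1 - 5 * l) * (yz - zz) + qz ->
  qq <= l * l * (yy - 2 * yz + zz) ->
  uu <= l * l * yy ->
  0 <= (1 - 5 * l) ^ 2 * (yy - 2 * yz + zz) - 4 * (1 - 5 * l) * (yu - zu) + 4 * uu ->
  0 <= m * m * zz - 4 * m * (1 - 5 * l) * (yz - zz) + 4 * (1 - 5 * l) ^ 2 * (yy - 2 * yz + zz) ->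
  0 <= m * m * zz - 4 * m * qz + 4 * qq ->
  0 <= (1 + 5 * l) ^ 2 * yy - 2 * (1 + 5 * l) * yu + uu ->
  0 <= yy - 4 * yz + 4 * zz ->
  XP <= (1 - l * (m * m) / (4 + m * m)) * XX /\ yy <= XX /\ zz <= 2 / (5 * l * (m * m)) * XX.
Proof. intros Hl Hl2 Hm Hyy Hzz Huu Hqq Hee EX EXP HXP H1 H2 H3 H4 H5 P1 P2 P3 P4 P5.
  set (ee := yy - 2 * yz + zz) in *.
  set (d := 1 - 5 * l) in *. set (c := 1 + 5 * l) in *.
  assert (Hd : 7 / 12 < d) by (unfold d; lra). assert (Hd1 : d <= 1) by (unfold d; lra).
  assert (Hc : 1 <= c <= 17 / 12) by (unfold c; lra).
  assert (Hyu : 0 <= yu) by nra.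
  set (P := (d * yz - d * zz - zu) + yu).
  assert (S1 : d * (XX - XP) / 4 = 5 * l * d * ee + (d + 10 * l) * P - 10 * l * (yu - zu)).
  { unfold P, ee. rewrite EX, EXP. unfold c, d. field. }
  assert (S2 : 2 * d * (yu - zu) <= d ^ 2 / 2 * ee + 2 * uu) by lra.
  assert (S3 : uu <= 2 * l * P) by (assert (0 <= d * yz - d * zz - zu) by lra; unfold P; nra).
  assert (S4 : 10 * l * ee <= XX - XP).
  { assert (A : d * d * (XX - XP) / 4 = d * (5 * l * d * ee + (d + 10 * l) * P - 10 * l * (yu - zu))) by (rewrite <- S1; field).
    assert (A2 : d * (10 * l * (yu - zu)) <= 5 * l * (d ^ 2 / 2 * ee + 2 * uu)) by nra.
    assert (A3 : 10 * l * uu <= d * (d + 10 * l) * P).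
    { assert (d * (d + 10 * l) >= 1 / 2) by (unfold d; nra).
      assert (0 <= P) by (unfold P; lra).
      assert (10 * l * uu <= 10 * l * (2 * l * P)) by nra.
      assert (20 * l * l <= 1 / 2) by nra. nra. }
    assert (d * d * (XX - XP) / 4 >= 5 * l * d * d * ee / 2) by nra.
    assert (Hdd : 0 < d * d) by nra. 
    assert (d * d * (XX - XP - 10 * l * ee) >= 0) by nra.
    nra. }
  assert (S5 : m * m * zz <= 4 * ee).
  { assert (4 * m * (m * zz) <= 4 * m * (d * (yz - zz) + qz)) by (apply Rmult_le_compat_l; lra).
    assert (0 <= ee) by lra. assert (d ^ 2 <= 1) by nra. assert (d ^ 2 * ee <= ee) by nra.
    assert (l * l <= 1 / 100) by nra. assert (qq <= ee / 100) by nra.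
    nra. }
  assert (S6 : XX <= 5 * yy).
  { assert (c ^ 2 <= 289 / 144) by nra. assert (c ^ 2 * yy <= 289 / 144 * yy) by nra. nra. }
  assert (S7 : yy <= 2 * zz + 2 * ee).
  { unfold ee. lra. }
  assert (Hm2 : 0 < m * m) by nra.
  assert (S8 : m * m * XX <= (40 + 10 * (m * m)) * ee) by nra.
  split; [|split].
  - assert (Hee0 : 0 <= ee) by lra.
    assert (A : (40 + 10 * (m * m)) * (XX - XP) >= 10 * l * (m * m) * XX).
    { assert ((40 + 10 * (m * m)) * (XX - XP) >= (40 + 10 * (m * m)) * (10 * l * ee)) by nra. nra. }
    assert (E : (1 - l * (m * m) / (4 + m * m)) * XX = XX - 10 * l * (m * m) * XX / (40 + 10 * (m * m))) by (field; lra).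
    rewrite E. apply (Rmult_le_reg_l (40 + 10 * (m * m))). lra.
    replace ((40 + 10 * (m * m)) * (XX - 10 * l * (m * m) * XX / (40 + 10 * (m * m)))) with ((40 + 10 * (m * m)) * XX - 10 * l * (m * m) * XX) by (field; lra).
    lra.
  - unfold c in *. nra.
  - assert (A : 10 * l * (m * m * zz) <= 4 * XX) by nra.
    replace (2 / (5 * l * (m * m)) * XX) with (4 * XX / (10 * l * (m * m))) by (field; lra).
    apply (Rmult_le_reg_l (10 * l * (m * m))). nra.
    replace (10 * l * (m * m) * (4 * XX / (10 * l * (m * m)))) with (4 * XX) by (field; lra). lra.
Qed.
Lemma step {n} (F : vec n -> R) (g : vec n -> vec n) (G : vec n -> ext) (LF gamma mu bs bz : R)
  (us xs yv zv xv xn : vec n) :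
  convex F -> is_gradient F g -> 0 < LF -> lipschitz g LF -> 0 < gamma -> gamma < / (12 * LF) -> 0 < mu ->
  G us = Some bs ->
  (forall u bu, G u = Some bu -> bs - inner (g us) (vsub u us) <= bu) ->
  (forall z hz, sumFG F G z = Some hz -> F us + bs + mu / 4 * nsq (vsub z us) <= hz) ->
  (forall i, xv i = yv i + gamma * (g yv i + 5 * LF * yv i)) ->
  (forall i, xs i = us i + gamma * (g us i + 5 * LF * us i)) ->
  (forall i, xn i = xv i + 2 * (zv i - yv i)) ->
  G zv = Some bz ->
  (forall u bu, G u = Some bu -> bz + 2 * (5 * LF / 2) * inner zv (vsub u zv)
      + 2 * / (2 * gamma) * inner (vsub (vsub (vscal 2 yv) xv) zv) (vsub u zv) <= bu) ->
  nsq (vsub xn xs) <= (1 - (gamma * LF) * ((gamma * mu / 4) * (gamma * mu / 4)) / (4 + (gamma * mu / 4) * (gamma * mu / 4))) * nsq (vsub xv xs)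
  /\ nsq (vsub yv us) <= nsq (vsub xv xs)
  /\ nsq (vsub zv us) <= 2 / (5 * (gamma * LF) * ((gamma * mu / 4) * (gamma * mu / 4))) * nsq (vsub xv xs).
Proof. intros Fc Fg HL Flip Hg Hg2 Hmu Gus Hms Hgr FOC Hxs Xu Gz Hzs.
  set (l := gamma * LF). set (m := gamma * mu / 4).
  assert (Hl : 0 < l) by (unfold l; nra).
  assert (Hl2 : l < / 12).
  { unfold l. apply (Rmult_lt_compat_r LF) in Hg2; auto. rewrite Rinv_mult in Hg2.
    replace (/ 12 * / LF * LF) with (/12) in Hg2 by (field; lra). lra. }
  assert (Hm : 0 < m) by (unfold m; nra).
  set (Yd := vsub yv us). set (Zd := vsub zv us).
  set (U := vscal gamma (vsub (g yv) (g us))). set (Q := vscal gamma (vsub (g zv) (g yv))).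
  set (yy := nsq Yd). set (zz := nsq Zd). set (uu := nsq U). set (qq := nsq Q).
  set (yz := inner Yd Zd). set (yu := inner Yd U). set (zu := inner Zd U). set (qz := inner Q Zd).
  assert (Hyy : 0 <= yy) by apply nsq_nonneg. assert (Hzz : 0 <= zz) by apply nsq_nonneg.
  assert (Huu : 0 <= uu) by apply nsq_nonneg. assert (Hqq : 0 <= qq) by apply nsq_nonneg.
  assert (Eee : yy - 2 * yz + zz = nsq (vsub zv yv)).
  { unfold yy, yz, zz, Yd, Zd. vpt. ring. }
  assert (Hee : 0 <= yy - 2 * yz + zz) by (rewrite Eee; apply nsq_nonneg).
  assert (EX : nsq (vsub xv xs) = (1 + 5 * l) ^ 2 * yy + 2 * (1 + 5 * l) * yu + uu).
  { unfold yy, yu, uu, Yd, U, l. vpt. rewrite FOC, Hxs. ring. }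
  assert (EXP : nsq (vsub xn xs) = (1 - 5 * l) ^ 2 * yy + 4 * zz + uu - 4 * (1 - 5 * l) * yz - 2 * (1 - 5 * l) * yu + 4 * zu).
  { unfold yy, zz, yz, yu, uu, zu, Yd, Zd, U, l. vpt. rewrite Xu, FOC, Hxs. ring. }
  assert (HXP : 0 <= nsq (vsub xn xs)) by apply nsq_nonneg.
  assert (H1 : uu <= 2 * l * yu).
  { assert (C := cocoercive F g LF Fc Fg HL Flip us yv).
    assert (E1 : uu = gamma * gamma * nsq (vsub (g yv) (g us))) by (unfold uu, U; apply nsq_scal).
    assert (E2 : yu = gamma * inner (vsub (g yv) (g us)) (vsub yv us)).
    { unfold yu, Yd, U. rewrite inner_scalr, inner_comm. auto. }
    rewrite E1, E2. unfold l.
    assert (nsq (vsub (g yv) (g us)) <= 2 * LF * inner (vsub (g yv) (g us)) (vsub yv us)).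
    { apply (Rmult_le_reg_r (/ (2 * LF))). apply Rinv_0_lt_compat; lra.
      replace (2 * LF * inner (vsub (g yv) (g us)) (vsub yv us) * / (2 * LF)) with (inner (vsub (g yv) (g us)) (vsub yv us)) by (field; lra).
      exact C. }
    assert (0 < gamma * gamma) by nra. nra. }
  assert (A := Hzs us bs Gus).
  assert (B := Hms zv bz Gz).
  assert (H2 : 0 <= (1 - 5 * l) * yz - (1 - 5 * l) * zz - zu).
  { assert (E : (1 - 5 * l) * yz - (1 - 5 * l) * zz - zu =
       - gamma * (2 * (5 * LF / 2) * inner zv (vsub us zv) + 2 * / (2 * gamma) * inner (vsub (vsub (vscal 2 yv) xv) zv) (vsub us zv)
                  - inner (g us) (vsub zv us))).
    { unfold yz, zz, zu, Yd, Zd, U, l. vpt. rewrite FOC. field. lra. }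
    rewrite E. assert (0 < gamma) by lra. nra. }
  assert (H3 : m * zz <= (1 - 5 * l) * (yz - zz) + qz).
  {
    assert (Hsz : sumFG F G zv = Some (F zv + bz)) by (unfold sumFG; rewrite Gz; auto).
    assert (Gr := Hgr zv _ Hsz).
    assert (Gi := grad_ineq F g Fc Fg zv us).
    assert (E : (1 - 5 * l) * (yz - zz) + qz =
       - gamma * (inner (g zv) (vsub us zv) + 2 * (5 * LF / 2) * inner zv (vsub us zv) + 2 * / (2 * gamma) * inner (vsub (vsub (vscal 2 yv) xv) zv) (vsub us zv))).
    { unfold yz, zz, qz, Yd, Zd, Q, l. vpt. rewrite FOC. field. lra. }
    rewrite E. unfold m, zz, Zd. assert (0 < gamma) by lra. nra. }
  assert (H4 : qq <= l * l * (yy - 2 * yz + zz)).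
  { rewrite Eee. assert (E1 : qq = gamma * gamma * nsq (vsub (g zv) (g yv))) by (unfold qq, Q; apply nsq_scal).
    assert (Lp := lip_sq g LF Flip zv yv). rewrite E1. unfold l. assert (0 < gamma * gamma) by nra. nra. }
  assert (H5 : uu <= l * l * yy).
  { assert (E1 : uu = gamma * gamma * nsq (vsub (g yv) (g us))) by (unfold uu, U; apply nsq_scal).
    assert (Lp := lip_sq g LF Flip yv us). rewrite E1. unfold l, yy, Yd. assert (0 < gamma * gamma) by nra. nra. }
  assert (P1 : 0 <= (1 - 5 * l) ^ 2 * (yy - 2 * yz + zz) - 4 * (1 - 5 * l) * (yu - zu) + 4 * uu).
  { assert (E : (1 - 5 * l) ^ 2 * (yy - 2 * yz + zz) - 4 * (1 - 5 * l) * (yu - zu) + 4 * uu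
        = nsq (vsub (vscal (1 - 5 * l) (vsub Yd Zd)) (vscal 2 U))) by (unfold yy, yz, zz, yu, zu, uu; vpt; ring).
    rewrite E. apply nsq_nonneg. }
  assert (P2 : 0 <= m * m * zz - 4 * m * (1 - 5 * l) * (yz - zz) + 4 * (1 - 5 * l) ^ 2 * (yy - 2 * yz + zz)).
  { assert (E : m * m * zz - 4 * m * (1 - 5 * l) * (yz - zz) + 4 * (1 - 5 * l) ^ 2 * (yy - 2 * yz + zz)
        = nsq (vsub (vscal m Zd) (vscal (2 * (1 - 5 * l)) (vsub Yd Zd)))) by (unfold yy, yz, zz; vpt; ring).
    rewrite E. apply nsq_nonneg. }
  assert (P3 : 0 <= m * m * zz - 4 * m * qz + 4 * qq).
  { assert (E : m * m * zz - 4 * m * qz + 4 * qq = nsq (vsub (vscal m Zd) (vscal 2 Q))) by (unfold zz, qz, qq; vpt; ring).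
    rewrite E. apply nsq_nonneg. }
  assert (P4 : 0 <= (1 + 5 * l) ^ 2 * yy - 2 * (1 + 5 * l) * yu + uu).
  { assert (E : (1 + 5 * l) ^ 2 * yy - 2 * (1 + 5 * l) * yu + uu = nsq (vsub (vscal (1 + 5 * l) Yd) U)) by (unfold yy, yu, uu; vpt; ring).
    rewrite E. apply nsq_nonneg. }
  assert (P5 : 0 <= yy - 4 * yz + 4 * zz).
  { assert (E : yy - 4 * yz + 4 * zz = nsq (vsub Yd (vscal 2 Zd))) by (unfold yy, yz, zz; vpt; ring).
    rewrite E. apply nsq_nonneg. }
  destruct (core l m yy zz uu qq yz yu zu qz _ _ Hl Hl2 Hm Hyy Hzz Huu Hqq Hee EX EXP HXP H1 H2 H3 H4 H5 P1 P2 P3 P4 P5) as [R1 [R2 R3]].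
  split; [|split]; auto.
Qed.
Theorem proposition1 (n : nat) (F : vec n -> R) (gradF : vec n -> vec n)
  (G : vec n -> ext) (LF gamma : R) (y z x : nat -> vec n) :
  convex F -> is_gradient F gradF -> 0 < LF -> lipschitz gradF LF ->
  proper G -> lsc G -> prox_nonempty G -> coercive_ext (sumFG F G) ->
  convex_ext G -> strongly_convex_ext (sumFG F G) ->
  0 < gamma -> gamma < / (12 * LF) ->
  modified_PR F G LF gamma y z x ->
  exists ybar zbar xbar : vec n,
    ybar = zbar /\
    is_minimizer_ext (sumFG F G) zbar /\
    (forall u, is_minimizer_ext (sumFG F G) u -> u = zbar) /\
    converges_to y ybar /\ converges_to z zbar /\ converges_to x xbar /\
    exists M r, 0 < M /\ 0 < r < 1 /\
      forall t : nat, (1 <= t)%nat ->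
        Rmax (nsq (vsub (y t) ybar)) (Rmax (nsq (vsub (z t) zbar)) (nsq (vsub (x t) xbar)))
          <= M * r ^ t.
Proof.
  intros Fc Fg HL Flip Gp Gl _ _ Gc [mu [Hmu Hsc]] Hg Hg2 PR.
  assert (Hbeal : 0 <= / (2 * gamma) - 5 * LF / 2).
  { assert (gamma * (12 * LF) < 1).
    { apply (Rmult_lt_compat_r (12 * LF)) in Hg2; [|lra]. rewrite Rinv_l in Hg2; lra. }
    assert (/ (2 * gamma) = / gamma / 2) by (field; lra).
    assert (12 * LF < / gamma). { apply (Rmult_lt_reg_l gamma). lra. rewrite Rinv_r; lra. }
    lra. }
  assert (Zs : forall t, exists bz, G (z (S t)) = Some bz /\ forall u bu, G u = Some bu ->
     bz + 2 * (5 * LF / 2) * inner (z (S t)) (vsub u (z (S t)))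
      + 2 * / (2 * gamma) * inner (vsub (vsub (vscal 2 (y (S t))) (x t)) (z (S t))) (vsub u (z (S t))) <= bu).
  { intro t. destruct (PR t) as [_ [Hz _]]. apply (zstep_sub G (5 * LF / 2) (/ (2 * gamma))); auto. }
  assert (FOC : forall t i, x t i = y (S t) i + gamma * (gradF (y (S t)) i + 5 * LF * y (S t) i)).
  { intros t i. destruct (PR t) as [Hy _].
    assert (E := ystep_foc F gradF (5 * LF / 2) (/ (2 * gamma)) (x t) (y (S t)) Fg).
    assert (E' : gradF (y (S t)) i + 2 * (5 * LF / 2) * y (S t) i + 2 * / (2 * gamma) * (y (S t) i - x t i) = 0).
    { apply E; auto. lra. apply Rlt_le, Rinv_0_lt_compat; lra. }
    apply (Rmult_eq_compat_l gamma) in E'. field_simplify in E'; [|lra].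
    lra. }
  destruct (Zs O) as [bz1 [Gz1 Hz1]].
  destruct (exists_min F gradF G mu Fc Fg Gl Gp Hmu Hsc (z 1%nat)
     (vadd (vscal (2 * (5 * LF / 2)) (z 1%nat)) (vscal (2 * / (2 * gamma)) (vsub (vsub (vscal 2 (y 1%nat)) (x O)) (z 1%nat)))) bz1 Gz1)
     as [us Hus].
  { intros u bu Gu. specialize (Hz1 u bu Gu). rewrite inner_addl, !inner_scall. lra. }
  destruct (min_sub F gradF G us Fg Gc Hus) as [bs [Gus Hms]].
  assert (Hgr : forall zz hz, sumFG F G zz = Some hz -> F us + bs + mu / 4 * nsq (vsub zz us) <= hz).
  { intros zz hz Hzz. destruct Hus as [a [Ha Ma]].
    assert (a = F us + bs) by (unfold sumFG in Ha; rewrite Gus in Ha; simpl in Ha; injection Ha; lra).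
    subst a. apply (min_growth F G mu Hsc us _ zz hz Ha Ma Hzz). }
  set (xs := vadd us (vscal gamma (vadd (gradF us) (vscal (5 * LF) us)))).
  set (l := gamma * LF). set (m := gamma * mu / 4).
  set (rho := 1 - l * (m * m) / (4 + m * m)).
  set (K2 := 2 / (5 * l * (m * m))).
  assert (Hst : forall t, nsq (vsub (x (S t)) xs) <= rho * nsq (vsub (x t) xs)
     /\ nsq (vsub (y (S t)) us) <= nsq (vsub (x t) xs) /\ nsq (vsub (z (S t)) us) <= K2 * nsq (vsub (x t) xs)).
  { intro t. destruct (Zs t) as [bz [Gz Hz]].
    apply (step F gradF G LF gamma mu bs bz us xs (y (S t)) (z (S t)) (x t) (x (S t))); auto.
    all: try (intro i; apply FOC).
    all: try (intro i; unfold xs, vadd, vscal; ring).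
    all: intro i; destruct (PR t) as [_ [_ Hx]]; rewrite Hx; unfold vadd, vscal, vsub; ring. }
  assert (Hl : 0 < l) by (unfold l; nra).
  assert (Hl2 : l < 1).
  { unfold l. apply (Rmult_lt_compat_r LF) in Hg2; auto. rewrite Rinv_mult in Hg2.
    replace (/ 12 * / LF * LF) with (/12) in Hg2 by (field; lra). lra. }
  assert (Hm : 0 < m) by (unfold m; nra).
  assert (Hrho : 0 < rho < 1).
  { unfold rho. assert (0 < m * m) by nra.
    assert (0 < (m * m) / (4 + m * m) < 1). { split. apply Rdiv_lt_0_compat; lra.
      apply (Rmult_lt_reg_l (4 + m * m)). lra. field_simplify; lra. }
    split; [|assert (0 < l * (m * m) / (4 + m * m)) by (unfold Rdiv; rewrite Rmult_assoc; apply Rmult_lt_0_compat; lra); lra].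
    assert (l * (m * m) / (4 + m * m) < 1); [|lra].
    unfold Rdiv. rewrite Rmult_assoc. fold (m * m / (4 + m * m)). nra. }
  assert (HK2 : 0 < K2). { unfold K2. apply Rdiv_lt_0_compat. lra. apply Rmult_lt_0_compat. lra. apply Rmult_lt_0_compat; lra. }
  set (D0 := nsq (vsub (x O) xs)).
  assert (HD0 : 0 <= D0) by apply nsq_nonneg.
  assert (Hxr : forall t, nsq (vsub (x t) xs) <= rho ^ t * D0).
  { induction t. simpl. unfold D0. lra. destruct (Hst t) as [A _]. simpl.
    assert (rho * nsq (vsub (x t) xs) <= rho * (rho ^ t * D0)) by (apply Rmult_le_compat_l; lra). lra. }
  set (M := (1 + K2) * (D0 + 1) / rho).
  assert (HM : 0 < M) by (unfold M; apply Rdiv_lt_0_compat; nra).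
  assert (Hrate : forall t, (1 <= t)%nat ->
      nsq (vsub (y t) us) <= M * rho ^ t /\ nsq (vsub (z t) us) <= M * rho ^ t /\ nsq (vsub (x t) xs) <= M * rho ^ t).
  { intros t Ht. destruct t as [|t]. lia.
    destruct (Hst t) as [A [B C]]. specialize (Hxr t) as Xt.
    assert (Hp : 0 < rho ^ t) by (apply pow_lt; lra).
    assert (EM : M * rho ^ S t = (1 + K2) * (D0 + 1) * rho ^ t).
    { unfold M. simpl. field. lra. }
    rewrite EM. assert (0 <= nsq (vsub (x t) xs)) by apply nsq_nonneg.
    assert (Hr : rho ^ t * D0 <= rho ^ t * (D0 + 1)) by nra.
    split; [|split].
    - nra.
    - assert (K2 * nsq (vsub (x t) xs) <= K2 * (rho ^ t * D0)) by (apply Rmult_le_compat_l; lra). nra.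
    - assert (Xs := Hxr (S t)). simpl in Xs.
      assert (rho * (rho ^ t * D0) <= rho ^ t * D0) by nra. nra. }
  assert (Hconv : forall (s : nat -> vec n) (c : vec n), (forall t, (1 <= t)%nat -> nsq (vsub (s t) c) <= M * rho ^ t) -> converges_to s c).
  { intros s c Hs eps He. destruct (pow_lt_1_zero rho (ltac:(rewrite Rabs_pos_eq; lra)) (eps * eps / M)) as [N HN].
    apply Rdiv_lt_0_compat; nra.
    exists (max N 1). intros t Ht. apply norm_lt; auto.
    specialize (HN t (Nat.le_trans _ _ _ (Nat.le_max_l _ _) Ht)). rewrite Rabs_pos_eq in HN by (apply pow_le; lra).
    specialize (Hs t (Nat.le_trans _ _ _ (Nat.le_max_r _ _) Ht)).
    apply Rle_lt_trans with (M * rho ^ t); auto.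
    apply (Rmult_lt_compat_l M) in HN; auto. replace (M * (eps * eps / M)) with (eps * eps) in HN by (field; lra). auto. }
  exists us, us, xs. split; auto. split; auto. split.
  { intros u Hu. apply (min_unique F G mu Hmu Hsc); auto. }
  split. apply Hconv. intros t Ht. apply (Hrate t Ht).
  split. apply Hconv. intros t Ht. apply (Hrate t Ht).
  split. apply Hconv. intros t Ht. apply (Hrate t Ht).
  exists M, rho. split; auto. split; auto.
  intros t Ht. destruct (Hrate t Ht) as [A [B C]].
  apply Rmax_lub; auto. apply Rmax_lub; auto.
Qed.
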